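(* Let $C_n^\sigma=(C_n,\sigma)$, $n\ge 3$, be a compatible signed cycle. Then $\dim(C_n^\sigma)=1$ if and only if there exists a vertex $u$ such that $d^{\pm}(u)=0$ (i.e. the two edges at $u$ have opposite signs) and, for every $k\in\{1,2,\dots,\lfloor n/2\rfloor\}$ and all distinct $v,w\in N_k(u)$, one has $\sigma(uv)\neq\sigma(uw)$.
   Context: A signed graph $\Sigma=(G,\sigma)$ consists of a finite simple connected graph $G=(V,E)$ and a signature $\sigma:E\to\{+1,-1\}$. For vertices $u,v$, $d(u,v)$ denotes the usual distance in $G$; the sign of a path $P$ is $\sigma(P)=\prod_{e\in P}\sigma(e)$. Set $\sigma_{\max}(uv)=-1$ if every shortest $u$–$v$ path has sign $-1$, and $\sigma_{\max}(uv)=+1$ otherwise; set $\sigma_{\min}(uv)=+1$ if every shortest $u$–$v$ path has sign $+1$, and $\sigma_{\min}(uv)=-1$ otherwise. $\Sigma$ is (distance) compatible if $\sigma_{\max}(uv)d(u,v)=\sigma_{\min}(uv)d(u,v)$ for all vertices $u,v$; in that case the signed distance is $d_\Sigma(u,v)=\sigma_{\max}(uv)\,d(u,v)$, and $\sigma(uv)$ denotes the common value $\sigma_{\max}(uv)=\sigma_{\min}(uv)$ (for an edge $uv$ this is its edge sign). $d^+(v)$ and $d^-(v)$ are the numbers of positive and negative edges at $v$, and $d^\pm(v)=d^+(v)-d^-(v)$ is the net-degree. The open $k$-neighbourhood of $v$ is $N_k(v)=\{u: d_\Sigma(u,v)=\pm k\}$, i.e. the vertices at distance $k$ from $v$. For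 a compatible $\Sigma$ and an ordered subset $W=(w_1,\dots,w_k)$ of $V$, the metric representation of $v\in V$ is $r_\Sigma(v|W)=(d_\Sigma(v,w_1),\dots,d_\Sigma(v,w_k))$. $W$ is a resolving set of $\Sigma$ if $r_\Sigma(u|W)\neq r_\Sigma(v|W)$ for all distinct $u,v\in V$; a basis is a resolving set of minimum cardinality, and that cardinality is the metric dimension $\dim(\Sigma)$. *)

(* Defs.v *)
From mathcomp Require Import all_boot all_order all_algebra.
Set Implicit Arguments. Unset Strict Implicit. Unset Printing Implicit Defensive.
Import Order.TTheory GRing.Theory Num.Theory.

(* A signed graph on a finite vertex type T: adjacency relation [adj]
   (assumed symmetric and irreflexive) and a signature [neg] where
   [neg x y = true] means the edge xy is negative (sign -1).
   [neg] is assumed symmetric; its values on non-edges are irrelevant. *)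
Section SignedGraph.
Variables (T : finType) (adj : rel T) (neg : T -> T -> bool).

Definition walk (u : T) (p : seq T) (v : T) : bool :=
  path adj u p && (last u p == v).

Definition has_walk (k : nat) (u v : T) : bool :=
  [exists t : k.-tuple T, walk u t v].

(* usual distance: least length of a u-v walk (for a connected graph this
   is < #|T|, so the search range below is sufficient) *)
Definition dist (u v : T) : nat :=
  find (fun k => has_walk k u v) (iota 0 #|T|).

Fixpoint nneg (u : T) (p : seq T) : nat :=
  if p is x :: p' then neg u x + nneg x p' else 0.

Definition wsign (u : T) (p : seq T) : int := ((-1) ^+ nneg u p)%R.

(* shortest u-v paths are the u-v walks of length dist u v *)
Definition sigma_max (u v : T) : int :=
  if [forall t : (dist u v).-tuple T, walk u t v ==> (wsign u t == (-1)%R)]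
  then (-1)%R else 1%R.

Definition sigma_min (u v : T) : int :=
  if [forall t : (dist u v).-tuple T, walk u t v ==> (wsign u t == 1%R)]
  then 1%R else (-1)%R.

Definition compatible : Prop :=
  forall u v, (sigma_max u v * (dist u v)%:Z = sigma_min u v * (dist u v)%:Z)%R.

(* signed distance (meaningful for compatible signed graphs) *)
Definition sdist (u v : T) : int := (sigma_max u v * (dist u v)%:Z)%R.

Definition netdeg (v : T) : int :=
  ((#|[set w | adj v w && ~~ neg v w]|)%:Z - (#|[set w | adj v w && neg v w]|)%:Z)%R.

Definition Nk (v : T) (k : nat) : {set T} := [set u | dist u v == k].

(* resolving set (order of W irrelevant for distinguishing vectors) *)
Definition resolving (W : {set T}) : Prop :=
  forall u v, u != v -> exists2 w, w \in W & sdist u w != sdist v w.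

Definition metric_dim_is (m : nat) : Prop :=
  (exists W : {set T}, resolving W /\ #|W| = m) /\
  (forall W : {set T}, resolving W -> m <= #|W|).

End SignedGraph.

Definition cycle_adj (n : nat) : rel 'I_n :=
  fun i j => (val j == (val i).+1 %% n) || (val i == (val j).+1 %% n).
Arguments cycle_adj : clear implicits.

(* Main.v *)
Require Import Defs.
From mathcomp Require Import all_boot all_order all_algebra.
From mathcomp Require Import zify.
Import Order.TTheory GRing.Theory Num.Theory.

Section Gen.
Variables (T : finType) (adj : rel T) (neg : T -> T -> bool).
Hypothesis adj_sym : forall x y, adj x y = adj y x.
Hypothesis neg_sym : forall x y, neg x y = neg y x.

Lemma has_walkP k u v :
  reflect (exists2 p : seq T, size p == k & walk adj u p v) (has_walk adj k u v).
Proof.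
apply: (iffP existsP) => [[t Ht]|[p Hs Hw]].
  by exists (val t); rewrite ?size_tuple.
by exists (Tuple Hs).
Qed.

Lemma last_rev_belast (u : T) p : last (last u p) (rev (belast u p)) = u.
Proof. by case: p => [|x q] //=; rewrite rev_cons last_rcons. Qed.

Lemma walk_rev {u : T} {p : seq T} {v : T} : walk adj u p v -> walk adj v (rev (belast u p)) u.
Proof.
rewrite /walk => /andP[Hp /eqP <-].
rewrite last_rev_belast eqxx andbT rev_path.
by rewrite (@eq_path _ _ adj) // => x y; rewrite adj_sym.
Qed.

Lemma nneg_rcons u s x : nneg neg u (rcons s x) = nneg neg u s + neg (last u s) x.
Proof. by elim: s u => [|y s IH] u /=; rewrite ?addn0 // IH addnA. Qed.

Lemma nneg_rev u p : nneg neg u p = nneg neg (last u p) (rev (belast u p)).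
Proof.
elim: p u => [|x q IH] u //=.
rewrite rev_cons nneg_rcons -IH last_rev_belast neg_sym addnC //.
Qed.

Lemma has_walk_sym1 k u v : has_walk adj k u v -> has_walk adj k v u.
Proof.
move/has_walkP => [p Hs Hw]; apply/has_walkP.
by exists (rev (belast u p)); [rewrite size_rev size_belast | exact: walk_rev].
Qed.

Lemma has_walk_sym k u v : has_walk adj k u v = has_walk adj k v u.
Proof. by apply/idP/idP; apply: has_walk_sym1. Qed.

Lemma dist_sym u v : dist adj u v = dist adj v u.
Proof. by rewrite /dist; apply: eq_find => k; apply: has_walk_sym. Qed.

Lemma forall_sym k u v :
  [forall t : k.-tuple T, walk adj u t v ==> (wsign neg u t == (-1)%R)] ->
  [forall t : k.-tuple T, walk adj v t u ==> (wsign neg v t == (-1)%R)].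
Proof.
move/forallP=> H; apply/forallP => t; apply/implyP => Hw.
have Hs : size (rev (belast v t)) == k by rewrite size_rev size_belast size_tuple.
have := H (Tuple Hs); rewrite /= (walk_rev Hw) /= /wsign.
by rewrite (nneg_rev v t); move: Hw => /andP[_ /eqP ->].
Qed.

Lemma sigma_max_sym u v : sigma_max adj neg u v = sigma_max adj neg v u.
Proof.
rewrite /sigma_max (dist_sym u v).
have E : [forall t : (dist adj v u).-tuple T, walk adj u t v ==> (wsign neg u t == (-1)%R)] =
         [forall t : (dist adj v u).-tuple T, walk adj v t u ==> (wsign neg v t == (-1)%R)].
  by apply/idP/idP; apply: forall_sym.
by rewrite E.
Qed.

Lemma dist_le {k : nat} {u v : T} : has_walk adj k u v -> k < #|T| -> dist adj u v <= k.
Proof.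
move=> H Hk; rewrite leqNgt; apply/negP => Hlt.
by have := before_find 0 Hlt; rewrite nth_iota // add0n H.
Qed.

Lemma dist0 {u v : T} : dist adj u v = 0 -> 0 < #|T| -> u = v.
Proof.
move=> H0 HT.
have Hh : has (fun k => has_walk adj k u v) (iota 0 #|T|).
  by rewrite has_find size_iota -/(dist adj u v) H0.
have := nth_find 0 Hh; rewrite -/(dist adj u v) H0 nth_iota // add0n.
move/has_walkP => [p Hs]; move: Hs; rewrite size_eq0 => /eqP -> /andP[_ /eqP] //.
Qed.

Lemma dist1 {u v : T} : adj u v -> u != v -> 1 < #|T| -> dist adj u v = 1.
Proof.
move=> Ha Huv HT; apply/eqP; rewrite eqn_leq; apply/andP; split.
  apply: dist_le => //; apply/has_walkP; exists [:: v] => //.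
  by rewrite /walk /= Ha eqxx.
rewrite lt0n; apply/negP => /eqP /dist0 E.
by move: Huv; rewrite E ?eqxx //; apply: ltnW.
Qed.

Lemma sigma_adj u v : adj u v -> u != v -> 1 < #|T| ->
  sigma_max adj neg u v = if neg u v then (-1)%R else 1%R.
Proof.
move=> Ha Huv HT; rewrite /sigma_max (dist1 Ha Huv HT).
case Hn: (neg u v).
  rewrite ifT //; apply/forallP => -[[|t0 [|? ?]] Hs] //=.
  apply/implyP; rewrite /walk /= => /andP[_ /eqP ->].
  by rewrite /wsign /= Hn.
rewrite ifF //; apply/negbTE/forallPn; exists [tuple v].
by rewrite /walk /= Ha eqxx /wsign /= Hn.
Qed.

End Gen.

Lemma modcase a N : a < N + N -> (a < N /\ a %% N = a) \/ (N <= a /\ a %% N = a - N).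
Proof.
case: (ltnP a N) => H; [left; split => //; exact: modn_small | right; split => //].
rewrite -{1}(subnK H) modnDr modn_small //; lia.
Qed.

Section Cyc.
Variable n : nat.
Hypothesis Hn : 2 <= n.
Local Notation N := n.+1.
Local Notation adjN := (cycle_adj N).

Lemma adjN_sym x y : adjN x y = adjN y x.
Proof. by rewrite /cycle_adj orbC. Qed.

Definition succ (i : 'I_N) : 'I_N := Ordinal (ltn_pmod i.+1 (ltn0Sn n)).

Lemma val_iter_succ m (x : 'I_N) : val (iter m succ x) = (x + m) %% N.
Proof.
elim: m => [|m IH] /=; first by rewrite addn0 modn_small.
by rewrite IH -addn1 modnDml addn1 addnS.
Qed.

Lemma has_walk_iter m (x : 'I_N) : has_walk adjN m x (iter m succ x).
Proof.
apply/has_walkP; exists (traject succ (succ x) m); first by rewrite size_traject.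
rewrite /walk last_traject eqxx andbT.
apply: (sub_path _ (fpath_traject succ x m)) => y z /eqP <-.
by rewrite /cycle_adj /= eqxx.
Qed.

Lemma walk_half (x u : 'I_N) : x <= u -> exists2 m, m <= N./2 & has_walk adjN m x u.
Proof.
move=> Hxu.
have H1 : iter (u - x) succ x = u.
  by apply: val_inj; rewrite val_iter_succ subnKC // modn_small.
have H2 : iter (x + N - u) succ u = x.
  apply: val_inj; rewrite val_iter_succ addnC subnK; last by have := ltn_ord u; lia.
  by rewrite modnDr modn_small.
have := ltn_ord u; have := ltn_ord x => ? ?.
case: (leqP (u - x) N./2) => Hm.
  by exists (u - x) => //; have := has_walk_iter (u - x) x; rewrite H1.
exists (x + N - u); first lia.
by rewrite (@has_walk_sym _ _ adjN_sym); have := has_walk_iter (x + N - u) u; rewrite H2.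
Qed.

Lemma dist_half (x u : 'I_N) : dist adjN x u <= N./2.
Proof.
have Hw : exists2 m, m <= N./2 & has_walk adjN m x u.
  case: (leqP x u) => H; first exact: walk_half.
  have [m Hm Hw] := walk_half _ _ (ltnW H).
  by exists m; rewrite // (@has_walk_sym _ _ adjN_sym).
case: Hw => m Hm Hw.
have Hlt : m < #|'I_N| by rewrite card_ord; lia.
exact: leq_trans (@dist_le _ _ m x u Hw Hlt) Hm.
Qed.

Lemma cardN : 1 < #|'I_N|.
Proof. rewrite card_ord; lia. Qed.

Section Neg.
Variable neg : 'I_N -> 'I_N -> bool.
Hypothesis neg_sym : forall x y, neg x y = neg y x.

Definition Cond (u : 'I_N) := forall k, 1 <= k <= N./2 ->
        forall v w, v \in Nk adjN u k -> w \in Nk adjN u k ->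
          v != w -> sigma_max adjN neg u v != sigma_max adjN neg u w.

Lemma lemA u : resolving adjN neg [set u] -> Cond u.
Proof.
move=> HR k Hk v w Hv Hw Hvw.
have [w'] := HR v w Hvw; rewrite inE => /eqP ->.
rewrite /sdist; rewrite inE in Hv; rewrite inE in Hw.
rewrite (eqP Hv) (eqP Hw) (@sigma_max_sym _ _ _ adjN_sym neg_sym v).
rewrite (@sigma_max_sym _ _ _ adjN_sym neg_sym w).
by apply: contra => /eqP ->.
Qed.

Lemma abs_sigma x y : `|sigma_max adjN neg x y|%N = 1.
Proof. by rewrite /sigma_max; case: ifP. Qed.

Lemma lemB u : Cond u -> resolving adjN neg [set u].
Proof.
move=> HC x y Hxy; exists u; first by rewrite inE.
rewrite /sdist; apply/negP => /eqP E.
have Hd : dist adjN x u = dist adjN y u.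
  by have := congr1 absz E; rewrite !abszM !abs_sigma !mul1n.
case: (posnP (dist adjN x u)) => Hd0.
  have Ex := dist0 _ _ Hd0 (ltnW cardN); rewrite Hd in Hd0.
  have Ey := dist0 _ _ Hd0 (ltnW cardN).
  by move: Hxy; rewrite Ex Ey eqxx.
rewrite -Hd in E.
have Hnz : (Posz (dist adjN x u) != 0)%R by rewrite (_ : 0%R = Posz 0) // eqz_nat -lt0n.
have Es := mulIf Hnz E.
have Hk : 0 < dist adjN x u <= N./2 by rewrite Hd0 dist_half.
have Hx : x \in Nk adjN u (dist adjN x u) by rewrite inE.
have Hy : y \in Nk adjN u (dist adjN x u) by rewrite inE Hd.
have := HC _ Hk x y Hx Hy Hxy.
rewrite (@sigma_max_sym _ _ _ adjN_sym neg_sym u x) (@sigma_max_sym _ _ _ adjN_sym neg_sym u y).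
by rewrite Es eqxx.
Qed.

Lemma valE (x : 'I_N) : val x = nat_of_ord x. Proof. by []. Qed.

Lemma lemN u : Cond u -> netdeg adjN neg u = 0%R.
Proof.
move=> HC.
pose a := succ u; pose b := iter n succ u.
have Hu := ltn_ord u.
have va : nat_of_ord a = (nat_of_ord u).+1 %% N by [].
have vb : nat_of_ord b = (u + n) %% N by rewrite -valE val_iter_succ.
have M1 := modcase (u.+1) N ltac:(lia).
have M2 := modcase (u + n) N ltac:(lia).
have Hab : a != b.
  by apply/negP => /eqP/(congr1 (@nat_of_ord N)); rewrite va vb; lia.
have Hau : a != u.
  by apply/negP => /eqP/(congr1 (@nat_of_ord N)); rewrite va; lia.
have Hbu : b != u.
  by apply/negP => /eqP/(congr1 (@nat_of_ord N)); rewrite vb; lia.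
have adja : adjN u a by rewrite /cycle_adj valE va eqxx.
have adjb : adjN u b.
  rewrite /cycle_adj !valE vb; apply/orP; right; apply/eqP.
  have M3 := modcase ((u + n) %% N).+1 N ltac:(lia); lia.
have adjE : forall w, adjN u w -> (w == a) || (w == b).
  move=> w; have Hw := ltn_ord w.
  rewrite /cycle_adj !valE => /orP[/eqP Hw1|/eqP Hw1].
    by apply/orP; left; apply/eqP/ord_inj; rewrite Hw1 va.
  apply/orP; right; apply/eqP/ord_inj; rewrite vb.
  have M3 := modcase (w.+1) N ltac:(lia); lia.
have Hna : 1 < #|'I_N| := cardN.
have Hk : 1 <= 1 <= N./2 by rewrite /=; lia.
have Ina : a \in Nk adjN u 1.
  by rewrite inE (@dist1 _ adjN a u) // adjN_sym.
have Inb : b \in Nk adjN u 1.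
  by rewrite inE (@dist1 _ adjN b u) // adjN_sym.
have := HC 1 Hk a b Ina Inb Hab.
rewrite (@sigma_adj _ adjN neg u a) 1?eq_sym // (@sigma_adj _ adjN neg u b) 1?eq_sym //.
have Hsets : forall c d, c != d -> neg u c -> ~~ neg u d -> adjN u c -> adjN u d ->
   (forall w, adjN u w -> (w == c) || (w == d)) ->
   netdeg adjN neg u = 0%R.
  move=> c d Hcd Hc Hd Hac Had HE.
  have E1 : [set w | adjN u w && ~~ neg u w] = [set d].
    apply/setP => w; rewrite !inE; apply/idP/idP.
      move=> /andP[Hw Hn']; case/orP: (HE w Hw) => // /eqP Ew.
      by rewrite Ew Hc in Hn'.
    by move/eqP ->; rewrite Had Hd.
  have E2 : [set w | adjN u w && neg u w] = [set c].
    apply/setP => w; rewrite !inE; apply/idP/idP.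
      move=> /andP[Hw Hn']; case/orP: (HE w Hw) => // /eqP Ew.
      by rewrite Ew (negbTE Hd) in Hn'.
    by move/eqP ->; rewrite Hac Hc.
  by rewrite /netdeg E1 E2 !cards1 subrr.
case Hna': (neg u a); case Hnb: (neg u b) => // _.
  apply: (Hsets a b) => //; by rewrite Hnb.
apply: (Hsets b a) => //; first by rewrite eq_sym.
- by rewrite Hna'.
- by move=> w /adjE; rewrite orbC.
Qed.

End Neg.
End Cyc.

Theorem theorem2p8 (n : nat) (neg : 'I_n -> 'I_n -> bool) :
  3 <= n ->
  (forall x y, neg x y = neg y x) ->
  compatible (cycle_adj n) neg ->
  (metric_dim_is (cycle_adj n) neg 1 <->
   exists u : 'I_n,
     netdeg (cycle_adj n) neg u = 0%R /\
     (forall k, 1 <= k <= n./2 ->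
        forall v w, v \in Nk (cycle_adj n) u k -> w \in Nk (cycle_adj n) u k ->
          v != w ->
          sigma_max (cycle_adj n) neg u v != sigma_max (cycle_adj n) neg u w)).
Proof.
case: n neg => [//|n] neg Hn3 Hsym _.
have Hn : 2 <= n by [].
split.
  move=> [[W [HW /eqP/cards1P [w0 EW]]] _]; subst W.
  have HC := @lemA n neg Hsym w0 HW.
  exists w0; split; [exact: (@lemN n Hn neg w0 HC) | exact: HC].
move=> [u [_ HC]]; split.
  by exists [set u]; split; [exact: (@lemB n Hn neg Hsym u HC) | exact: cards1].
move=> W HW; rewrite lt0n; apply/negP => /eqP/cards0_eq E; subst W.
have Hne : (ord0 : 'I_n.+1) != ord_max by apply/eqP => /(congr1 val) /=; lia.
by have [w] := HW _ _ Hne; rewrite inE.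
Qed.
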